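(* Consider the single-block on-chain auction game described in the context with $n=1$ (so $N=\{0,1\}$), $F=F_0=\mathrm{Uniform}[0,1]$, and reserve price $r>0$. Then the following strategy profile constitutes an equilibrium: (i) Bidder 1 bids truthfully, $b_1=v_1$, and tips $t_1(v_1)=v_1/2-r$ if $v_1>2r$ and $t_1(v_1)=0$ otherwise. (ii) Bidder 0, having observed bidder 1's tip $t_1$ and knowing his value $v_0$, bribes (i.e. offers the proposer a payment of $t_1$ in exchange for excluding bidder 1's bid) if $t_1+r\le v_0$, and does not bribe otherwise; moreover bidder 0 submits a nonzero bid in the auction if and only if he bribes. (iii) The proposer accepts bidder 0's bribe whenever it is offered and then excludes bidder 1's bid; otherwise the proposer includes both bids.
   Context: Single-block on-chain auction game. A seller has one indivisible good; there are $n+1$ buyers $N=\{0,1,\dots,n\}$, $n\ge 1$, with quasilinear utilities. Buyer $i$ has a private value $v_i$; $v_0$ is drawn from a distribution with CDF $F_0$, and $v_1,\dots,v_n$ are drawn i.i.d. from a distribution with CDF $F$, all independent, with supports $[0,1]$; $n,F,F_0$ are common knowledge. The seller runs a sealed-bid second-price auction with reserve price $r$ in which bids are accepted in a single block built by a single profit-maximizing proposer. Timing: (1) the seller announces the auction; (2) buyers learn their values; (3) buyers $1,\dots,n$ simultaneously submit a private (sealed) bid $b_i$ and a publicly observed tip $t_i\ge 0$; (4) buyer 0 observes the tips and his value $v_0$, and may make the proposer a take-it-or-leave-it offer of a subset $S\subseteq\{1,\dots,n\}$ and a payment $p$ to exclude the bids in $S$; buyer 0 also submits his own bid $b_0$;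 (5) the proposer accepts (including exactly the bids of $N\setminus S$ and receiving $p$) or rejects (including all bids); he accepts if and only if $p\ge\sum_{i\in S}t_i$; (6) the second-price auction is computed on the included bids: the highest included bid wins if it is at least $r$, paying the maximum of $r$ and the other included bids. A bidder pays his tip to the proposer iff his bid is included. Solution concept: perfect Bayesian equilibrium, restricted to profiles in which (a) bidders $1,\dots,n$ bid truthfully and use a common tipping function of their value, and (b) bidder 0 bids his value if, given the observed tips, he assigns positive probability to winning, and otherwise bids $0$ or does not bid. Such profiles are called equilibria. *)

(* Defs.v *)
From HB Require Import structures.
From mathcomp Require Import all_boot all_order all_algebra.
From mathcomp Require Import all_classical all_reals all_analysis.
Set Implicit Arguments. Unset Strict Implicit. Unset Printing Implicit Defensive.
Import Order.TTheory GRing.Theory Num.Theory.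
Local Open Scope classical_set_scope.
Local Open Scope ring_scope.

(* Single-block on-chain auction game with n = 1, i.e. N = {0, 1}.
   Values live in [0,1]; the prior of each value is Uniform[0,1], i.e. the
   Lebesgue measure restricted to [0,1].

   Actions:
   - bidder 1 : a (sealed) bid b1 : R and a public tip t1 >= 0;
   - bidder 0 : an optional take-it-or-leave-it offer  Some (S1, p)  where
       S1 = true means S = {1} and S1 = false means S = {} (the empty set),
       and p is the payment; plus an optional bid (None = does not bid);
   - proposer : accept (true) or reject (false) the offer, as a function of
       the publicly observed tip and the offer. *)

Section Game.
Variable R : realType.

Definition offer := option (bool * R).
Definition action0 := (offer * option R)%type.

Definition accepted (o : offer) (a : bool) : bool :=
  if o is Some _ then a else false.

Definition excl1 (o : offer) : bool :=
  if o is Some (S1, _) then S1 else false.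

Definition payment (o : offer) : R :=
  if o is Some (_, p) then p else 0.

Definition included1 (o : offer) (a : bool) : bool :=
  ~~ (accepted o a && excl1 o).

(* second-price auction with reserve r on the included bids
   (None = no included bid).  Ties between included bids are resolved in
   favour of bidder 1. *)
Definition wins0 (r : R) (b0 b1 : option R) : bool :=
  if b0 is Some x then (r <= x) && (if b1 is Some y then y < x else true)
  else false.

Definition wins1 (r : R) (b0 b1 : option R) : bool :=
  if b1 is Some y then (r <= y) && (if b0 is Some x then x <= y else true)
  else false.

Definition price (r : R) (other : option R) : R := Num.max r (odflt r other).

Definition incl_bid1 (b1 : R) (o : offer) (a : bool) : option R :=
  if included1 o a then Some b1 else None.

Definition u1 (r v1 b1 t1 : R) (a0 : action0) (a : bool) : R :=
  let B1 := incl_bid1 b1 a0.1 a in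
  (if wins1 r a0.2 B1 then v1 - price r a0.2 else 0)
  - (if included1 a0.1 a then t1 else 0).

Definition u0 (r v0 b1 : R) (a0 : action0) (a : bool) : R :=
  let B1 := incl_bid1 b1 a0.1 a in
  (if wins0 r a0.2 B1 then v0 - price r B1 else 0)
  - (if accepted a0.1 a then payment a0.1 else 0).

Definition uP (t1 : R) (o : offer) (a : bool) : R :=
  (if accepted o a then payment o else 0)
  + (if included1 o a then t1 else 0).

Definition unit_interval : set R := `[0, 1]%classic.

Definition EU1 (r : R) (s0 : R -> R -> action0) (acc : R -> offer -> bool)
    (v1 b1 t1 : R) : \bar R :=
  (\int[@lebesgue_measure R]_(v0 in unit_interval)
     (u1 r v1 b1 t1 (s0 t1 v0) (acc t1 (s0 t1 v0).1))%:E)%E.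

(* expected utility of bidder 0 (value v0) who observed the tip t1, holds
   the belief mu about v1 (bidder 1 bids truthfully), and plays a0 *)
Definition EU0 (r : R) (acc : R -> offer -> bool)
    (mu : probability (measurableTypeR R) R) (t1 v0 : R) (a0 : action0)
    : \bar R :=
  (\int[mu]_(v1 in [set: R]) (u0 r v0 v1 a0 (acc t1 a0.1))%:E)%E.

Definition tip_preimage (tau : R -> R) (t : R) : set R :=
  [set v | unit_interval v /\ tau v = t].

(* Beliefs of bidder 0 about v1 after observing tip t:
   - on path with a positive-probability tip: Bayes' rule (conditioning the
     uniform prior on the event tau v1 = t);
   - on path with a zero-probability tip: supported on the types sending t;
   - off path: an arbitrary probability on the type space [0,1]. *)
Definition belief_consistent (tau : R -> R)
    (mu : R -> probability (measurableTypeR R) R) : Prop :=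
  forall t : R, 0 <= t ->
    let E := tip_preimage tau t in
    (E = set0 -> mu t unit_interval = 1%E) /\
    (E !=set0 -> (0 < @lebesgue_measure R E)%E ->
       forall A : set (measurableTypeR R), measurable A ->
         (mu t A * @lebesgue_measure R E = @lebesgue_measure R (A `&` E))%E) /\
    (E !=set0 -> @lebesgue_measure R E = 0%E -> mu t E = 1%E).

Definition equilibrium (r : R) (tau : R -> R) (s0 : R -> R -> action0)
    (acc : R -> offer -> bool) : Prop :=
  (forall v1, unit_interval v1 -> 0 <= tau v1) /\
  (forall (t : R) (o : offer) (a : bool), 0 <= t -> uP t o a <= uP t o (acc t o)) /\
  exists mu : R -> probability (measurableTypeR R) R,
    belief_consistent tau mu /\
    (forall t v0 : R, 0 <= t -> unit_interval v0 ->
       forall a0 : action0, (EU0 r acc (mu t) t v0 a0 <= EU0 r acc (mu t) t v0 (s0 t v0))%E) /\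
    (forall t v0 : R, 0 <= t -> unit_interval v0 ->
       let o := (s0 t v0).1 in
       let W := [set v1 : R | wins0 r (Some v0) (incl_bid1 v1 o (acc t o))] in
       ((0 < mu t W)%E -> (s0 t v0).2 = Some v0) /\
       (mu t W = 0%E -> (s0 t v0).2 = None \/ (s0 t v0).2 = Some 0)) /\
    (forall v1 b1 t1 : R, unit_interval v1 -> 0 <= t1 ->
       (EU1 r s0 acc v1 b1 t1 <= EU1 r s0 acc v1 v1 (tau v1))%E).

Definition tip_star (r v1 : R) : R := if 2 * r < v1 then v1 / 2 - r else 0.

Definition s0_star (r : R) (nb : R -> R -> bool) (t v0 : R) : action0 :=
  if t + r <= v0 then (Some (true, t), Some v0)
  else (None, if nb t v0 then None else Some 0).

Definition acc_star (t : R) (o : offer) : bool :=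
  if o is Some (S1, p) then (if S1 then t else 0) <= p else false.

End Game.

(* Main.v *)
From HB Require Import structures.
Require Import Defs.
From mathcomp Require Import all_boot all_order all_algebra.
From mathcomp Require Import all_classical all_reals all_analysis.
From mathcomp Require Import lra.
Import Order.TTheory GRing.Theory Num.Theory.
Set Implicit Arguments. Unset Strict Implicit. Unset Printing Implicit Defensive.
Local Open Scope classical_set_scope.
Local Open Scope ring_scope.

Ltac noif a := lazymatch a with context [if _ then _ else _] => fail | _ => idtac end.
Ltac splitc := repeat match goal with
 | |- context [ if ?a <= ?b then _ else _ ] => noif b; case: (lerP a b) => ? /=
 | |- context [ if ?a < ?b then _ else _ ] => noif b; case: (ltrP a b) => ? /=
 | |- context [ (?a <= ?b) && _ ] => noif b; case: (lerP a b) => ? /=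
 | |- context [ (?a < ?b) && _ ] => noif b; case: (ltrP a b) => ? /=
 | |- context [ _ && (?a <= ?b) ] => noif b; case: (lerP a b) => ? /=
 | |- context [ _ && (?a < ?b) ] => noif b; case: (ltrP a b) => ? /=
 end.

Lemma tip_star_ge0 (R : realType) (r v : R) : 0 < r -> 0 <= tip_star r v.
Proof. move=> hr; rewrite /tip_star; splitc; lra. Qed.

Lemma proposer_ok (R : realType) (t : R) (o : offer R) (a : bool) :
  0 <= t -> uP t o a <= uP t o (acc_star t o).
Proof.
move=> ht; case: o => [[[] p]|]; case: a; rewrite /uP /acc_star /=; splitc; lra.
Qed.

Lemma u0_le (R : realType) (r v0 v1 t : R) (o : offer R) (b0 : option R) :
  0 < r -> 0 <= t -> (t = 0 \/ v0 <= v1 \/ t + r <= v1) ->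
  u0 r v0 v1 (o, b0) (acc_star t o) <= (if t + r <= v0 then v0 - r - t else 0).
Proof.
move=> hr ht hv.
have hv' : t = 0 \/ v0 <= v1 \/ t + r <= v1 := hv.
case: o => [[[] p]|]; case: b0 => [x|];
rewrite /u0 /incl_bid1 /included1 /accepted /excl1 /payment /acc_star /wins0 /price /=;
  rewrite ?maxEle /=.
all: splitc.
all: try (case: hv' => [E|[E|E]]; try rewrite E in ht *; lra).

Qed.

Lemma u0_s0 (R : realType) (r v0 v1 t : R) nb :
  0 < r -> 0 <= t ->
  u0 r v0 v1 (s0_star r nb t v0) (acc_star t (s0_star r nb t v0).1) =
  (if t + r <= v0 then v0 - r - t else 0).
Proof.
move=> hr ht; rewrite /s0_star; case: ifP => h.
  rewrite /u0 /incl_bid1 /included1 /accepted /excl1 /payment /acc_star /wins0 /price /= lexx /=.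
  rewrite maxEle lexx; have -> : r <= v0 by lra.
  by [].

case: (nb t v0); rewrite /u0 /incl_bid1 /included1 /accepted /excl1 /payment /acc_star /wins0 /price /=;
  splitc; lra.
Qed.

Lemma u1_s0 (R : realType) (r v1 b1 t1 v0 : R) nb :
  0 < r -> 0 <= t1 ->
  u1 r v1 b1 t1 (s0_star r nb t1 v0) (acc_star t1 (s0_star r nb t1 v0).1) =
  (if t1 + r <= v0 then 0 else (if r <= b1 then v1 - r else 0) - t1).
Proof.
move=> hr ht; rewrite /s0_star; case: ifP => h.
  by rewrite /u1 /incl_bid1 /included1 /accepted /excl1 /payment /acc_star /wins1 /price /= lexx /= subr0.
case: (nb t1 v0); rewrite /u1 /incl_bid1 /included1 /accepted /excl1 /payment /acc_star /wins1 /price /=;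
  rewrite ?maxEle /= ?lexx; splitc; lra.
Qed.
Lemma b1_ineq (R : realType) (r v1 b1 t : R) : 0 < r -> 0 <= v1 <= 1 -> 0 <= t ->
  ((if r <= b1 then v1 - r else 0) - t) * Num.min (t + r) 1 <=
  ((if r <= v1 then v1 - r else 0) - tip_star r v1) * Num.min (tip_star r v1 + r) 1.
Proof.
move=> hr /andP[h0 h1] ht.
set A := (if r <= v1 then v1 - r else 0).
have hA : (if r <= b1 then v1 - r else 0) <= A.
  rewrite /A; case: (lerP r b1); case: (lerP r v1); lra.
have hm : 0 <= Num.min (t + r) 1 by rewrite le_min; apply/andP; split; lra.
apply: (le_trans (y := (A - t) * Num.min (t + r) 1)).
  by apply: ler_wpM2r => //; lra.
rewrite /A /tip_star; rewrite !minEle.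
case: (lerP r v1) => hrv; case: (ltrP (2 * r) v1) => h2r; case: (lerP (t + r) 1) => htr.
all: try (have -> : v1 / 2 - r + r <= 1 by lra).
all: try (have -> : 0 + r <= 1 by lra).
all: try (have -> : (0 + r <= 1) = false by apply/negbTE; rewrite -ltNge; lra).
all: try nra.
all: have := sqr_ge0 (v1 - 2 * (t + r)); nra.
Qed.
Lemma lt_itv_eq (R : realType) (s : R) : [set v : R | v < s] = `]-oo, s[%classic.
Proof. by apply/seteqP; split => x; rewrite /= in_itv. Qed.

Lemma leb_S (R : realType) (s : R) : 0 < s ->
  lebesgue_measure (@Defs.unit_interval R `&` [set v : R | v < s]) = (Num.min s 1)%:E.
Proof.
move=> hs; rewrite minEle; case: (lerP s 1) => hs1.
  have -> : @Defs.unit_interval R `&` [set v : R | v < s] = `[0, s[%classic.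
    apply/seteqP; split => x /=; rewrite /Defs.unit_interval /= !in_itv /=.
      by move=> [/andP[-> _] ->].
    by move=> /andP[h1 h2]; rewrite h1 h2; split => //; apply/ltW/(lt_le_trans h2).
  by rewrite lebesgue_measure_itv /= lte_fin hs -EFinD subr0.
have -> : @Defs.unit_interval R `&` [set v : R | v < s] = `[0, 1]%classic.
  apply/seteqP; split => x /=; rewrite /Defs.unit_interval /= !in_itv /=.
    by move=> [].
  by move=> h; split => //; case/andP: h => _ h; apply: le_lt_trans h hs1.
by rewrite lebesgue_measure_itv /= lte_fin ltr01 -EFinD subr0.
Qed.

Lemma EU1_eq (R : realType) (r : R) nb (v1 b1 t1 : R) : 0 < r -> 0 <= t1 ->
  EU1 r (s0_star r nb) (@acc_star R) v1 b1 t1 =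
  (((if r <= b1 then v1 - r else 0) - t1) * Num.min (t1 + r) 1)%:E.
Proof.
move=> hr ht; rewrite /EU1.
set K := (if r <= b1 then v1 - r else 0) - t1.
transitivity (\int[@lebesgue_measure R]_(x in @Defs.unit_interval R)
   ((cst K%:E) \_ [set v : R | (v < t1 + r)%R]) x)%E.
  apply: eq_integral => v0 _; rewrite u1_s0 // patchE.
  case: (lerP (t1 + r) v0) => h.
    by rewrite memNset //= ; apply/negP; rewrite -leNgt.
  by rewrite mem_set.
rewrite -integral_mkcondr integral_cst.
  transitivity (K%:E * (Num.min (t1+r) 1)%:E)%E; last by rewrite EFinM.
  congr (_ * _)%E; apply: leb_S; lra.
have hm : measurable (@Defs.unit_interval R `&` [set v : R | v < t1 + r]).
  apply: measurableI; first exact: measurable_itv.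
  by rewrite lt_itv_eq; exact: measurable_itv.
exact: hm.
Qed.
Lemma mes_u0 (R : realType) (r v0 : R) (o : offer R) (b0 : option R) (a : bool) :
  measurable_fun (setT : set R) (fun v1 : R => u0 r v0 v1 (o, b0) a).
Proof.
rewrite /u0 /incl_bid1 /=.
case: (included1 o a) => /=; last exact: measurable_cst.
case: b0 => [x|] /=; last exact: measurable_cst.
rewrite /wins0 /price /=.
case: (r <= x) => /=; last exact: measurable_cst.
apply: measurable_realfun.measurable_funB; last exact: measurable_cst.
apply: measurable_fun_if => //.
- exact: (measurable_realfun.measurable_fun_ltr (f:=id) (g:=cst x)).
- apply: measurable_funTS; apply: measurable_realfun.measurable_funB; first exact: measurable_cst.
  exact: (measurable_realfun.measurable_maxr (f:=cst r) (g:=id)).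

Qed.

Lemma int_le (R : realType) (mu : probability (measurableTypeR R) R) (f : R -> R) (B : R) :
  measurable_fun (setT : set R) f -> (forall x, f x <= B) -> 0 <= B ->
  (\int[mu]_(x in [set: R]) (f x)%:E <= B%:E)%E.
Proof.
move=> mf fB B0.
rewrite integralE -[B%:E]sube0; apply: leeB; last first.
  by apply/integral_ge0 => x _; exact: funeneg_ge0.
apply: (@le_trans _ _ (\int[mu]_(x in [set: R]) (cst B%:E) x)%E).
  apply: ge0_le_integral => //.
  - apply: measurable_realfun.measurable_funepos.
    exact: (measurable_realfun.measurable_EFinP _ _).2 mf.
  - by move=> x _; rewrite funeposE /= ge_max !lee_fin fB B0.
rewrite integral_cst //.
rewrite le_eqVlt; apply/orP; left; apply/eqP.
transitivity (B%:E * 1)%E; last exact: mule1.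
congr (_ * _)%E; exact: probability_setT.
Qed.

HB.instance Definition _ d (T : measurableType d) (R : realType) (a : T) :=
  Measure_isProbability.Build _ _ R (@dirac d T a R) (diracT R a).

Definition Dprob (R : realType) (a : R) : probability (measurableTypeR R) R :=
  Probability.clone _ _ _ (@dirac _ (measurableTypeR R) a R) _.

Lemma int_dirac (R : realType) (a : R) (f : R -> R) : measurable_fun (setT : set R) f ->
  (\int[Dprob a]_(x in [set: R]) (f x)%:E = (f a)%:E)%E.
Proof.
move=> mf; rewrite integral_dirac//; first by rewrite diracT mul1e.
exact: (measurable_realfun.measurable_EFinP _ _).2 mf.
Qed.

Definition Uprob (R : realType) (m : R) (h : 0 < m) : probability (measurableTypeR R) R :=
  Probability.clone _ _ _ (uniform_prob h) _.

Lemma UprobE (R : realType) (m : R) (h : 0 < m) (A : set R) : measurable A ->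
  Uprob h A = ((m^-1)%:E * lebesgue_measure (A `&` `[0%R, m]%classic))%E.
Proof.
move=> mA; rewrite /Uprob /= /uniform_prob integral_uniform_pdf.
rewrite (eq_integral (fun=> (m - 0)^-1%:E)); last first.
  by move=> x; rewrite inE/= in_itv/= /uniform_pdf => -[_ ->].
rewrite integral_cst ?subr0 //.
exact: measurableI.
Qed.

Definition cval (R : realType) (r t : R) : R := Num.min (2 * (t + r)) 1.
Definition mval (R : realType) (r : R) : R := Num.min (2 * r) 1.

Lemma mval_gt0 (R : realType) (r : R) : 0 < r -> 0 < mval r.
Proof. by move=> hr; rewrite /mval lt_min; apply/andP; split => //; lra. Qed.

Definition mu_star (R : realType) (r : R) (hr : 0 < r) (t : R) :
  probability (measurableTypeR R) R :=
  if t == 0 then Uprob (mval_gt0 hr) else Dprob (cval r t).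

Lemma tip_pre_pos (R : realType) (r t x : R) : 0 < r -> t != 0 ->
  tip_preimage (tip_star r) t x -> x = 2 * (t + r) /\ 0 <= x <= 1.
Proof.
move=> hr tn0; rewrite /tip_preimage /Defs.unit_interval /= in_itv /= => -[hx].
rewrite /tip_star; case: ltrP => h2 ht.
  by split => //; lra.
by move: tn0; rewrite -ht eqxx.
Qed.

Lemma tip_pre0 (R : realType) (r : R) : 0 < r ->
  tip_preimage (tip_star r) 0 = `[0, mval r]%classic.
Proof.
move=> hr; apply/seteqP; split => x; rewrite /tip_preimage /Defs.unit_interval /mval /= !in_itv /=.
  move=> [/andP[h0 h1]]; rewrite /tip_star; case: ltrP => h2 ht.
    lra.
  by rewrite h0 le_min h1 h2.
rewrite le_min => /andP[h0 /andP[h1 h2]]; rewrite h0 h2; split => //.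
by rewrite /tip_star ltNge h1.
Qed.

Lemma prob_setT_eq (R : realType) (mu : probability (measurableTypeR R) R) :
  mu [set: R] = 1%E.
Proof. exact: probability_setT. Qed.

Theorem proposition2 (R : realType) (r : R) (nb : R -> R -> bool) :
  0 < r ->
  equilibrium r (tip_star r) (s0_star r nb) (@acc_star R).
Proof.
move=> hr; split; first by move=> v1 _; exact: tip_star_ge0.
split; first by move=> t o a ht; exact: proposer_ok.
exists (mu_star hr).
split.
  move=> t ht /=; rewrite /mu_star; case: eqP => [t0|tn0].
    subst t; rewrite tip_pre0 //.
    have m0 := mval_gt0 hr.
    split.
      move=> E0; exfalso.
      have : (`[0, mval r]%classic : set R) 0 by rewrite /= in_itv /= lexx ltW.
      by rewrite E0.
    split.
      move=> _ _ A mA; rewrite UprobE // lebesgue_measure_itv /= lte_fin m0.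
      by rewrite oppr0 adde0 muleAC -EFinM mulVf ?mul1e // gt_eqF.
    move=> _; rewrite lebesgue_measure_itv /= lte_fin m0 oppr0 adde0 => /eqP.
    by rewrite eqe gt_eqF.
  have tn0' : t != 0 by apply/eqP.
  have Eset : forall x, tip_preimage (tip_star r) t x ->
      tip_preimage (tip_star r) t = [set x].
    move=> x Ex; have [hx _] := tip_pre_pos hr tn0' Ex.
    apply/seteqP; split => y.
      by move=> Ey; have [hy _] := tip_pre_pos hr tn0' Ey; rewrite /= hy hx.
    by move=> /= ->.
  split.
    move=> _; rewrite /Dprob /= diracE mem_set //.
    rewrite /Defs.unit_interval /= in_itv /= /cval le_min ge_min lexx orbT andbT.
    have : 0 < t by rewrite lt_neqAle eq_sym tn0' ht.
    move=> tp; rewrite ler01 andbT; lra.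
  split.
    move=> [x Ex] hpos; exfalso.
    move: hpos; rewrite (Eset x Ex) lebesgue_measure_set1.
    by rewrite ltxx.
  move=> [x Ex] _.
  have [hx /andP[_ hx1]] := tip_pre_pos hr tn0' Ex.
  rewrite (Eset x Ex) /Dprob /= diracE /cval minEle -hx hx1 mem_set //.
split.
  move=> t v0 ht hv0 a0; case: a0 => o0 b0; rewrite /EU0.
  set B := (if t + r <= v0 then v0 - r - t else 0).
  have B0 : 0 <= B by rewrite /B; case: ifP => h; lra.
  have -> : (\int[mu_star hr t]_(v1 in [set: R])
      (u0 r v0 v1 (s0_star r nb t v0) (acc_star t (s0_star r nb t v0).1))%:E
      = B%:E)%E.
    transitivity (\int[mu_star hr t]_(v1 in [set: R]) (cst B%:E) v1)%E.
      by apply: eq_integral => v1 _; rewrite u0_s0.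
    rewrite integral_cst //.
    transitivity (B%:E * 1)%E; last exact: mule1.
    congr (_ * _)%E; exact: probability_setT.
  rewrite /mu_star; case: eqP => [t0|tn0].
    apply: int_le => //; first exact: mes_u0.
    move=> v1; apply: u0_le => //; by left.
  rewrite int_dirac; last exact: mes_u0.
  rewrite lee_fin; apply: u0_le => //; right.
  move: hv0; rewrite /Defs.unit_interval /= in_itv /= /cval minEle => /andP[h0 h1].
  by case: (lerP (2 * (t + r)) 1) => h; [right|left]; lra.
split.
  move=> t v0 ht hv0 /=.
  move: hv0; rewrite /Defs.unit_interval /= in_itv /= => /andP[h0 h1].
  rewrite /s0_star; case: ifP => h /=.
    split => // H.
    exfalso.
    have hW : [set v1 | wins0 r (Some v0) (incl_bid1 v1 (Some (true, t)) (acc_star t (Some (true, t))))] = [set: R].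
      apply/seteqP; split => x //= _.
      rewrite /incl_bid1 /included1 /acc_star /accepted /excl1 /= lexx /=.
      by rewrite andbT; lra.
    move: H; rewrite hW.
    have -> : mu_star hr t [set: R] = 1%E by exact: probability_setT.
    by move=> /eqP; rewrite onee_eq0.
  have -> : mu_star hr t [set v1 | wins0 r (Some v0) (incl_bid1 v1 None (acc_star t None))] = 0%E.
    rewrite /mu_star; case: eqP => [t0|tn0].
      have -> : [set v1 | wins0 r (Some v0) (incl_bid1 v1 None (acc_star t None))] = set0.
        apply/seteqP; split => x //=.
        rewrite /incl_bid1 /included1 /acc_star /accepted /=.
        move: h; rewrite t0 add0r => /negbT; rewrite -ltNge => h.
        by rewrite leNgt h.
      exact: measure0.
    rewrite /Dprob /= diracE memNset //=.
    rewrite /incl_bid1 /included1 /acc_star /accepted /= /cval minEle.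
    move: h => /negbT; rewrite -ltNge => h.
    rewrite ltNge; case: (lerP (2 * (t + r)) 1) => h2; [have -> : v0 <= 2 * (t + r) by lra | have -> : v0 <= 1 by lra]; by rewrite andbF.
  split; first by rewrite ltxx.
  by case: (nb t v0); [left|right].
move=> v1 b1 t1 hv1 ht1.
rewrite !EU1_eq //; last exact: tip_star_ge0.
rewrite lee_fin; apply: b1_ineq => //.
Qed.
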